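(* Let $f$ be a bicritical rational map of degree $d$ and let $p$ be a prime number not dividing $d$. Then for every $k\in\mathbb{N}$, the group $\mathrm{Deck}(f^k)$ has no element of order $p$.
   Context: A rational map of degree $d\ge2$ is bicritical if it has exactly two critical points. $\mathrm{Deck}(F)=\{\tau \text{ Möbius} : F\circ\tau=F\}$. $f^k$ is the $k$-th iterate. *)

(* Defs.v *)
From HB Require Import structures.
From mathcomp Require Import all_boot all_order all_algebra.
From mathcomp.real_closed Require Import complex.
From mathcomp Require Import reals.
Set Implicit Arguments. Unset Strict Implicit. Unset Printing Implicit Defensive.
Import Order.TTheory GRing.Theory Num.Theory.
Local Open Scope ring_scope.
Local Open Scope complex_scope.

(* Riemann sphere: option C, with None standing for the point at infinity. *)

Section RationalMaps.
Variable C : fieldType.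

(* degree of the rational map P/Q (P, Q coprime) *)
Definition rdeg (P Q : {poly C}) : nat := (maxn (size P) (size Q)).-1.

Definition rat_eval (P Q : {poly C}) (z : option C) : option C :=
  match z with
  | Some z => if Q.[z] == 0 then None else Some (P.[z] / Q.[z])
  | None => let d := rdeg P Q in
            if Q`_d == 0 then None else Some (P`_d / Q`_d)
  end.

(* polynomial whose roots (with multiplicity) are the finite points of the
   fiber over w *)
Definition fibpoly (P Q : {poly C}) (w : option C) : {poly C} :=
  match w with Some w => P - w%:P * Q | None => Q end.

Definition locdeg (P Q : {poly C}) (z : option C) : nat :=
  let F := fibpoly P Q (rat_eval P Q z) in
  match z with
  | Some z => mup z F
  | None => rdeg P Q - (size F).-1
  end.

Definition critical_point (P Q : {poly C}) (z : option C) : Prop :=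
  (2 <= locdeg P Q z)%N.

Definition bicritical (P Q : {poly C}) : Prop :=
  exists c1 c2 : option C, c1 <> c2 /\
    forall z, critical_point P Q z <-> (z = c1 \/ z = c2).

Definition is_mobius (t : option C -> option C) : Prop :=
  exists a b c e : C, a * e - b * c != 0 /\
    t =1 rat_eval (a *: 'X + b%:P) (c *: 'X + e%:P).

Definition Deck (F : option C -> option C) (t : option C -> option C) : Prop :=
  is_mobius t /\ F \o t =1 F.

Definition has_order (t : option C -> option C) (n : nat) : Prop :=
  (0 < n)%N /\ iter n t =1 id /\
  forall m, (0 < m < n)%N -> ~ (iter m t =1 id).

End RationalMaps.

(* Main.v *)
Require Import Defs.
From HB Require Import structures.
From mathcomp Require Import all_boot all_order all_algebra.
From mathcomp.real_closed Require Import complex.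
From mathcomp Require Import reals.
From mathcomp Require Import all_fingroup all_solvable.
From mathcomp Require Import zify ring.
Import GRing.Theory Num.Theory.
Local Open Scope ring_scope.

Section Roots.
Variable C : closedFieldType.

Lemma roots_list (F : {poly C}) : F != 0 ->
  exists s : seq C, [/\ forall z, root F z = (z \in s),
     size F = (size s).+1 & forall z, mup z F = count_mem z s].
Proof.
move=> F0; have [s Fs] := closed_field_poly_normal F.
have lc0 : lead_coef F != 0 by rewrite lead_coef_eq0.
exists s; split.
- by move=> z; rewrite Fs rootZ // root_prod_XsubC.
- by rewrite Fs size_scale // size_prod_XsubC.
- move=> z; rewrite Fs -mul_polyC mupMr ?mu_prod_XsubC //.
  by rewrite rootC.
Qed.

Lemma uniq_of_count (T : eqType) (s : seq T) :
  (forall z, z \in s -> count_mem z s < 2)%N -> uniq s.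
Proof.
elim: s => //= x s IH H; apply/andP; split.
- apply/negP=> xs; have := H x (mem_head _ _).
  by rewrite /= eqxx add1n ltnS ltnNge -has_count has_pred1 xs.
- apply: IH => z zs; have /= := H z; rewrite inE zs orbT => /(_ isT).
  by case: (x == z) => //= /ltnW.
Qed.
End Roots.


Section Fiber.
Variable C : closedFieldType.
Variables P Q : {poly C}.
Hypothesis cop : coprimep P Q.
Hypothesis hd : (2 <= rdeg P Q)%N.

Lemma hm : (rdeg P Q).+1 = maxn (size P) (size Q).
Proof. by rewrite /rdeg prednK //; move: hd; rewrite /rdeg; case: maxn. Qed.

Lemma Q_neq0 : Q != 0.
Proof.
apply/eqP => Q0; move: cop hd; rewrite Q0 coprimep0 => /eqp_size.
by rewrite size_poly1 /rdeg size_poly0 => ->.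
Qed.

Lemma coef_nz : P`_(rdeg P Q) != 0 \/ Q`_(rdeg P Q) != 0.
Proof.
have := hm; have := hd; case: (leqP (size Q) (size P)) => h.
- move=> h2 e; left.
  have -> : rdeg P Q = (size P).-1 by rewrite -e.
  rewrite -lead_coefE lead_coef_eq0 -size_poly_eq0 -e //.
- move=> h2 e; right.
  have -> : rdeg P Q = (size Q).-1 by rewrite -e.
  rewrite -lead_coefE lead_coef_eq0 -size_poly_eq0 -e //.
Qed.

Lemma sizeF w : (size (fibpoly P Q w) <= (rdeg P Q).+1)%N.
Proof.
rewrite hm; case: w => [v|] /=; last exact: leq_maxr.
apply: leq_trans (size_polyD _ _) _; rewrite size_polyN geq_max leq_maxl /=.
by rewrite mul_polyC (leq_trans (size_scale_leq _ _)) // leq_maxr.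
Qed.

Lemma topF w : ((fibpoly P Q w)`_(rdeg P Q) == 0) = (rat_eval P Q None == w).
Proof.
case: w => [v|] /=; last by case: eqP.
rewrite coefB coefCM.
have [q0|q0] := eqVneq (Q`_(rdeg P Q)) 0.
  rewrite q0 mulr0 subr0; case: coef_nz => //; last by rewrite q0 eqxx.
  by move=> /negPf ->.
apply/idP/idP.
- rewrite subr_eq0 => /eqP e; rewrite e mulfK //.
- move/eqP=> [<-]; by rewrite mulfVK // subrr.
Qed.

Lemma rootF w z : root (fibpoly P Q w) z = (rat_eval P Q (Some z) == w).
Proof.
rewrite /root; case: w => [v|] /=; last by case: (Q.[z] == 0).
rewrite !hornerE.
have [q0|q0] := eqVneq (Q.[z]) 0.
  rewrite q0 mulr0 subr0 /=.
  apply/negP => /eqP p0.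
  have := coprimep_root cop (x := z); rewrite /root p0 eqxx q0 eqxx.
  by move=> /(_ isT).
rewrite subr_eq0 /=; apply/eqP/eqP.
- by move=> ->; rewrite mulfK.
- by move=> [<-]; rewrite mulfVK.
Qed.

Lemma F_neq0 w : fibpoly P Q w != 0.
Proof.
case: w => [v|] /=; last exact: Q_neq0.
apply/eqP => /eqP; rewrite subr_eq0 => /eqP e.
have sQ : size Q != 1%N.
  have h2 := hm; rewrite {2}e mul_polyC in h2.
  have h1 := size_scale_leq v Q.
  rewrite (maxn_idPr h1) in h2.
  by rewrite -h2 eqSS; move: hd; case: (rdeg P Q).
have [z rz] := closed_rootP Q sQ.
have cop2 : coprimep Q P by rewrite coprimep_sym.
have := coprimep_root cop2 rz.
by rewrite e hornerE (eqP rz) mulr0 eqxx.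
Qed.

Lemma mem_mapSome (s : seq C) z : (Some z \in map Some s) = (z \in s).
Proof. by rewrite mem_map // => a b []. Qed.

Lemma None_notin_mapSome (s : seq C) : (None \in map Some s) = false.
Proof. by apply/negP => /mapP [? _]. Qed.

Lemma fiber w : (forall x, rat_eval P Q x = w -> (locdeg P Q x < 2)%N) ->
  exists s : seq (option C),
    [/\ uniq s, size s = rdeg P Q & forall x, (x \in s) = (rat_eval P Q x == w)].
Proof.
move=> hw.
set F := fibpoly P Q w.
have [s [rs ss ms]] := @roots_list _ _ (F_neq0 w).
have us : uniq s.
  apply: uniq_of_count => z zs; rewrite -ms.
  have fz : rat_eval P Q (Some z) = w by apply/eqP; rewrite -rootF rs.
  by have := hw _ fz; rewrite /locdeg fz.
have sF : (size F <= (rdeg P Q).+1)%N := sizeF w.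
have tF : (F`_(rdeg P Q) == 0) = (rat_eval P Q None == w) := topF w.
have F0 : F != 0 := F_neq0 w.
case: (eqVneq (rat_eval P Q None) w) => hN.
- exists (None :: map Some s); split.
  + by rewrite /= None_notin_mapSome map_inj_uniq // => a b [].
  + have := hw _ hN; rewrite /locdeg hN -/F => hl.
    rewrite hN eqxx in tF.
    have sF2 : (size F <= rdeg P Q)%N.
      rewrite leqNgt; apply/negP => h.
      have e : size F = (rdeg P Q).+1 by apply/eqP; rewrite eqn_leq sF h.
      move: tF; rewrite -[X in F`_X]/((rdeg P Q).+1.-1) -e -lead_coefE.
      by rewrite lead_coef_eq0 (negPf F0).
    rewrite /= size_map; move: hl sF2; rewrite ss /=.
    by case: (rdeg P Q) hd => // n _; lia.
  + case=> [z|] /=; rewrite inE /=.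
    * by rewrite mem_mapSome -rs rootF.
    * by move: hN => /= ->; rewrite eqxx.
- exists (map Some s); split.
  + by rewrite map_inj_uniq // => a b [].
  + rewrite size_map.
    have : (rdeg P Q < size F)%N.
      rewrite ltnNge; apply/negP => h; move: hN; rewrite -tF.
      by rewrite (nth_default _ h) eqxx.
    by move: sF; rewrite /F ss; lia.
  + case=> [z|].
    * by rewrite mem_mapSome -rs rootF.
    * by rewrite None_notin_mapSome (negPf hN).
Qed.

End Fiber.

Local Close Scope ring_scope.

Section Tree.
Variables (T T' : eqType).

Lemma glue (g : T -> T') (n : nat) (l : seq T') : uniq l ->
  (forall v, v \in l -> exists s : seq T,
     [/\ uniq s, size s = n & forall x, (x \in s) = (g x == v)]) ->
  exists s : seq T, [/\ uniq s, size s = n * size l & forall x, (x \in s) = (g x \in l)].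
Proof.
elim: l => [|v l IH] /=.
  by move=> _ _; exists [::]; split => //; rewrite muln0.
move=> /andP [vl ul] H.
have [s1 [u1 z1 m1]] := H v (mem_head _ _).
have [s2 [u2 z2 m2]] : exists s : seq T, [/\ uniq s, size s = n * size l &
    forall x, (x \in s) = (g x \in l)].
  by apply: IH => // u ul'; apply: H; rewrite inE ul' orbT.
exists (s1 ++ s2); split.
- rewrite cat_uniq u1 u2 andbT /=; apply/hasPn => x; rewrite m2 /= m1.
  by apply: contraL => /eqP ->.
- by rewrite size_cat z1 z2 mulnS.
- by move=> x; rewrite mem_cat m1 m2 inE.
Qed.
End Tree.

Section Tree2.
Variables (T : eqType) (f : T -> T) (d : nat) (crit : seq T).
Hypothesis base : forall w, (forall c, c \in crit -> f c != w) ->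
  exists s : seq T, [/\ uniq s, size s = d & forall x, (x \in s) = (f x == w)].

Lemma tree k : forall w, (forall c j, c \in crit -> (0 < j <= k)%N -> iter j f c != w) ->
  exists s : seq T, [/\ uniq s, size s = d ^ k & forall x, (x \in s) = (iter k f x == w)].
Proof.
elim: k => [|k IH] w H.
  by exists [:: w]; split => // x; rewrite inE.
have [l [ul zl ml]] := base w (fun c hc => H c 1 hc isT).
have hl : forall v, v \in l -> exists s : seq T,
    [/\ uniq s, size s = d ^ k & forall x, (x \in s) = (iter k f x == v)].
  move=> v hv; apply: IH => c j hc hj; apply/eqP => e; move: hv.
  rewrite ml -e -iterS.
  by rewrite (negPf (H c j.+1 hc _)) //; lia.
have [s [us zs ms]] := @glue _ _ (iter k f) _ _ ul hl.
exists s; split => //; first by rewrite zs zl expnSr.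
by move=> x; rewrite ms ml iterS.
Qed.
End Tree2.


Section PermArg.
Variables (T : choiceType) (t : T -> T) (p : nat).
Hypothesis pr : prime p.
Hypothesis hp : forall x, iter p t x = x.

Lemma perm_arg (S : seq T) : uniq S -> (forall x, x \in S -> t x \in S) ->
  (forall x, x \in S -> t x != x) -> (p %| size S)%N.
Proof.
move=> uS hS hF.
have tinj : injective t.
  move=> x y e; rewrite -(hp x) -(hp y).
  by case: p pr => // n _; rewrite !iterSr e.
pose tS (u : seq_sub S) : seq_sub S := SeqSub (hS _ (ssvalP u)).
have tSinj : injective tS.
  by move=> u v e; apply: val_inj; apply: tinj; move: (congr1 (@ssval _ S) e).
pose sg := perm tSinj.
have iterg : forall n u, ssval ((sg ^+ n)%g u) = iter n t (ssval u).
  elim=> [|n IHn] u; first by rewrite expg0 perm1.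
  by rewrite expgSr permM permE /= IHn.
have sgp : (sg ^+ p)%g = 1%g.
  by apply/permP => u; apply: val_inj; rewrite perm1 /= iterg hp.
have pg : pgroup p <[sg]>%g.
  have : (#[sg]%g %| p)%N by rewrite order_dvdn sgp eqxx.
  by move=> h; apply: (pnat_dvd h (pnat_id pr)).
have ac : [acts <[sg]>%g, on [set: seq_sub S] | 'P].
  by apply/actsP => a _ x; rewrite !inE.
have := pgroup_fix_mod pg ac.
have -> : ('Fix_([set: seq_sub S] | 'P)(<[sg]>))%g = set0.
  apply/setP => u; rewrite in_set0; apply/negP => /setIP [_ /afixP H]. have := H sg (cycle_id _).
  move=> e; have e' : sg u = u := e; have := iterg 1 u; rewrite expg1 e' /= => e2.
  by have := hF _ (ssvalP u); rewrite -e2 eqxx.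
rewrite cards0 cardsT card_seq_sub // mod0n.
by move=> /eqP.
Qed.
End PermArg.

Local Open Scope ring_scope.

Section Main.
Variable C : numClosedFieldType.

Lemma exists_notin (B : seq (option C)) : exists w, w \notin B.
Proof.
pose s := map (fun n : nat => Some (n%:R : C)) (iota 0 (size B).+1).
have us : uniq s.
  rewrite map_inj_uniq ?iota_uniq // => m n [] /eqP.
  by rewrite eqr_nat => /eqP.
have : ~~ all (mem B) s.
  apply/negP => /allP sub; have := uniq_leq_size us sub.
  by rewrite size_map size_iota ltnn.
by case/allPn => x _ xB; exists x.
Qed.

Lemma mobius_fix (t : option C -> option C) : is_mobius t -> ~ (t =1 id) ->
  exists sH : seq C, forall x, t x = x -> x = None \/ exists2 z, x = Some z & z \in sH.
Proof.
move=> [a [b [c [e [det ht]]]]] notid.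
pose H : {poly C} := c%:P * 'X^2 + (e - a)%:P * 'X - b%:P.
have [H0|H0] := eqVneq H 0.
  exfalso; apply: notid.
  have h2 := congr1 (fun q : {poly C} => q`_2) H0.
  have h1 := congr1 (fun q : {poly C} => q`_1) H0.
  have h0 := congr1 (fun q : {poly C} => q`_0) H0.
  move: h2 h1 h0; rewrite /H /= !(coefD, coefB, coefCM, coefXn, coefX, coefN, coefC, coef0) /=.
  rewrite !(mulr1, mulr0, addr0, add0r, oppr0, subr0) => c0 /eqP; rewrite subr_eq0.
  move=> /eqP ea /eqP; rewrite oppr_eq0 => /eqP b0.
  subst c b e; move: det; rewrite mulr0 subr0 mulf_eq0 orbb => a0.
  case=> [z|] /=; rewrite ht /=.
  - rewrite !hornerE (negPf a0) /=; congr Some.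
    by rewrite mulrC mulKf.
    rewrite scale0r add0r addr0.
    have -> : rdeg (a *: 'X) a%:P = 1%N.
      by rewrite /rdeg size_scale // size_polyX size_polyC a0.
    by rewrite coefC eqxx.
have [sH [rs _ _]] := @roots_list _ _ H0.
exists sH; case=> [z|] fx; last by left.
right; exists z => //; rewrite -rs /root.
move: fx; rewrite ht /= !hornerE.
have [d0|d0] := eqVneq (c * z + e) 0 => //= [[E]].
have E2 : a * z + b = ((a * z + b) / (c * z + e)) * (c * z + e) by rewrite divfK.
rewrite E in E2.
apply/eqP.
transitivity (z * (c * z + e) - (a * z + b)); first by ring.
by rewrite -E2 subrr.
Qed.
Theorem main_gen (P Q : {poly C}) (p : nat) :
  coprimep P Q ->
  (2 <= rdeg P Q)%N ->
  bicritical P Q ->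
  prime p ->
  ~~ (p %| rdeg P Q)%N ->
  forall k : nat, ~ (exists t : option C -> option C,
                       Deck (iter k (rat_eval P Q)) t /\ has_order t p).
Proof.
move=> cop hd [c1 [c2 [c12 hcrit]]] pr ndvd k [t [[mob hdeck] [p0 [hp hmin]]]].
set f := rat_eval P Q.
have notid : ~ t =1 id.
  by move=> tid; apply: (hmin 1%N); [rewrite /= prime_gt1 | move=> x; exact: tid].
have [sH hfix] := mobius_fix t mob notid.
set B := [seq iter j.+1 f c | c <- [:: c1; c2], j <- iota 0 k] ++
         [seq iter k f x | x <- None :: map Some sH].
have [w wB] := exists_notin B.
have base : forall w', (forall c, c \in [:: c1; c2] -> f c != w') ->
    exists s : seq (option C),
      [/\ uniq s, size s = rdeg P Q & forall x, (x \in s) = (f x == w')].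
  move=> w' hw'; apply: fiber => // x fx.
  rewrite ltnNge; apply/negP => h.
  have hx : x \in [:: c1; c2].
    by rewrite !inE; case: ((hcrit x).1 h) => ->; rewrite eqxx ?orbT.
  by move: (hw' x hx); rewrite /f fx eqxx.
have hcond : forall c j, c \in [:: c1; c2] -> (0 < j <= k)%N -> iter j f c != w.
  move=> c j hc hj; apply/eqP => e.
  suff : w \in B by rewrite (negPf wB).
  rewrite mem_cat; apply/orP; left; apply/allpairsP; exists (c, j.-1) => /=.
  split => //; first by rewrite mem_iota; lia.
  by rewrite -e -iterS prednK //; lia.
have [S [uS zS mS]] := @tree _ _ _ _ base k w hcond.
have := @perm_arg _ t p pr hp S uS.
rewrite zS Euclid_dvdX // (negPf ndvd) /=.
move=> Hc; suff : false by []; apply: Hc.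
- by move=> x; rewrite !mS => /eqP <-; apply/eqP; exact: hdeck.
- move=> x; rewrite mS => /eqP ex; apply/eqP => tx.
  move: wB; rewrite mem_cat negb_or => /andP [_]; apply/negP; apply/negPn.
  rewrite -ex; apply: map_f.
  have [->|[z -> zs]] := hfix _ tx; first exact: mem_head.
  by rewrite inE mem_mapSome zs orbT.
Qed.
End Main.


Theorem mainTheorem6 (R : realType) (P Q : {poly R[i]}) (p : nat) :
  coprimep P Q ->
  (2 <= rdeg P Q)%N ->
  bicritical P Q ->
  prime p ->
  ~~ (p %| rdeg P Q)%N ->
  forall k : nat, ~ (exists t : option R[i] -> option R[i],
                       Deck (iter k (rat_eval P Q)) t /\ has_order t p).
Proof. exact: (@main_gen (R[i] : numClosedFieldType)). Qed.
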